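(* Let $k=2^{\ell}$ for an integer $\ell\ge 2$ and let $q=4k$. Let $a,b\in\mathfrak S_q$ be the permutations $$a=(c_0,c_1)(c_2,c_3)\cdots(c_{4k-2},c_{4k-1}),$$ and $b=C_1C_2$, where $C_1$ and $C_2$ are the following two disjoint $2k$-cycles: - $C_1$ is the cycle whose entries, in order, are: for $m=0,1,\dots,\frac{k-2}{2}$ successively the pair $c_{2m},\,c_{2(2m+k-1)}$; then for $n=0,1,\dots,\frac{k-4}{2}$ successively the pair $c_{2n+k},\,c_{2(2n+k)}$; and finally $c_{4k-1},\,c_{4k-4}$. That is, $C_1=(c_0,c_{2k-2},c_2,c_{2k+2},\dots,c_{k-2},c_{4k-6},c_k,c_{2k},c_{k+2},c_{2k+4},\dots,c_{2k-4},c_{4k-8},c_{4k-1},c_{4k-4})$. - $C_2$ is the cycle whose entries, in order, are: for $m=0,1,\dots,\frac{k-2}{2}$ successively the pair $c_{2m+1},\,c_{2(2m+k)+1}$; then for $n=0,1,\dots,\frac{k-4}{2}$ successively the pair $c_{2n+k+1},\,c_{2(2n+k)-1}$; and finally $c_{4k-2},\,c_{4k-5}$. That is, $C_2=(c_1,c_{2k+1},c_3,c_{2k+5},\dots,c_{k-1},c_{4k-3},c_{k+1},c_{2k-1},c_{k+3},c_{2k+3},\dots,c_{2k-3},c_{4k-9},c_{4k-2},c_{4k-5})$. Then $G_1=\{b^{j}a^{i}: 0\le j\le 2k-1,\ 0\le i\le 1\}$ is a subgroup of $\mathfrak S_q$ with $|G_1|=q$, and no element of $G_1$ other than the identity has a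 fixed point.
   Context: $q$ is a prime power and the elements of the finite field $\mathbb F_q$ are enumerated once and for all as $\mathbb F_q=\{c_0,c_1,\dots,c_{q-1}\}$. $\mathfrak S_q$ denotes the symmetric group of all permutations of $\mathbb F_q$; products of permutations are compositions applied right to left, $(\sigma\tau)(x)=\sigma(\tau(x))$, and permutations are written in cycle notation. *)

(* Defs.v *)
From HB Require Import structures.
From mathcomp Require Import all_boot all_order all_algebra all_fingroup all_field.
Set Implicit Arguments. Unset Strict Implicit. Unset Printing Implicit Defensive.
Import GRing.Theory.

(* The map underlying the cycle (s_0, s_1, ..., s_{n-1}):
   s_i |-> s_{i+1 mod n}, and every x not in s is fixed. *)
Definition cycle_fun (T : finType) (s : seq T) (x : T) : T :=
  nth x (rot 1 s) (index x s).

(* The cyclic permutation written in cycle notation by the list s.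
   (For a duplicate-free list s, cycle_fun s is injective; if not injective
   we return the identity, which never happens for the lists used below.) *)
Definition cycle_perm (T : finType) (s : seq T) : {perm T} :=
  match injectiveP (cycle_fun s) with
  | ReflectT h => perm h
  | ReflectF _ => 1%g
  end.

Section Thm3p1.
Variable F : finFieldType.
(* enumeration F_q = {c_0, ..., c_{q-1}}, given as a sequence cs *)
Variable cs : seq F.
Variable k : nat.

Definition cc (i : nat) : F := nth 0%R cs i.

Definition perm_a : {perm F} :=
  (\prod_(i < 2 * k) cycle_perm [:: cc (2 * i); cc (2 * i).+1])%g.

Definition C1_idx : seq nat :=
  flatten [seq [:: 2 * m; 2 * (2 * m + k - 1)] | m <- iota 0 k./2]
  ++ flatten [seq [:: 2 * n + k; 2 * (2 * n + k)] | n <- iota 0 (k./2 - 1)]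
  ++ [:: 4 * k - 1; 4 * k - 4].

Definition C2_idx : seq nat :=
  flatten [seq [:: 2 * m + 1; 2 * (2 * m + k) + 1] | m <- iota 0 k./2]
  ++ flatten [seq [:: 2 * n + k + 1; 2 * (2 * n + k) - 1] | n <- iota 0 (k./2 - 1)]
  ++ [:: 4 * k - 2; 4 * k - 5].

Definition perm_C1 : {perm F} := cycle_perm (map cc C1_idx).
Definition perm_C2 : {perm F} := cycle_perm (map cc C2_idx).

Definition perm_b : {perm F} := (perm_C1 * perm_C2)%g.

(* G1 = { b^j a^i : 0 <= j <= 2k-1, 0 <= i <= 1 }.  MathComp composes
   permutations left to right ((s * t) x = t (s x)), so the paper's b^j a^i
   (apply a^i first) is a^i * b^j here. *)
Definition G1 : {set {perm F}} :=
  [set (perm_a ^+ i * perm_b ^+ j)%g | i : 'I_2, j : 'I_(2 * k)].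
End Thm3p1.

(* Main.v *)
Require Import Defs.
From HB Require Import structures.
From mathcomp Require Import all_boot all_order all_algebra all_fingroup all_field.
From mathcomp Require Import zify.

Set Implicit Arguments. Unset Strict Implicit.

Section Arith.
Variable k k4 : nat.
Hypothesis hk : k = 4 * k4.
Hypothesis hk4 : 0 < k4.

Definition X (i : nat) : nat := if i < k then (if odd i then 2*i + 2*k - 4 else i)
  else if i < 2*k-2 then (if odd i then 2*i-2 else i) else if i == 2*k-2 then 4*k-1 else 4*k-4.
Definition Y (i : nat) : nat := if i < k then (if odd i then 2*i + 2*k - 1 else i.+1)
  else if i < 2*k-2 then (if odd i then 2*i-3 else i.+1) else if i == 2*k-2 then 4*k-2 else 4*k-5.
Definition flip (j : nat) := if odd j then j.-1 else j.+1.
Definition mu (i : nat) := if odd i then (if i < k then i + k else i - k) else i.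

Ltac crush2 := rewrite /X /Y /mu; repeat (case: ifP => ?); rewrite /flip; repeat (case: ifP => ?); lia.
Ltac crush := rewrite ?/X ?/Y ?/flip ?/mu; repeat (case: ifP => ?); lia.

Lemma X_lt i : i < 2*k -> X i < 4*k. Proof. move=> ?; crush. Qed.
Lemma Y_lt i : i < 2*k -> Y i < 4*k. Proof. move=> ?; crush. Qed.
Lemma X_inj i j : i < 2*k -> j < 2*k -> X i = X j -> i = j.
Proof. move=> ? ?; crush. Qed.
Lemma Y_inj i j : i < 2*k -> j < 2*k -> Y i = Y j -> i = j.
Proof. move=> ? ?; crush. Qed.
Lemma XY_neq i j : i < 2*k -> j < 2*k -> X i <> Y j.
Proof. move=> ? ?; crush. Qed.
Lemma mu_lt i : i < 2*k -> mu i < 2*k. Proof. move=> ?; crush. Qed.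
Lemma flipX i : i < 2*k -> flip (X i) = Y (mu i).
Proof. move=> ?; rewrite /mu; repeat (case: ifP => ?); rewrite /X /Y; repeat (case: ifP => ?); rewrite /flip; repeat (case: ifP => ?); lia. Qed.
Lemma flipY i : i < 2*k -> flip (Y i) = X (mu i).
Proof. move=> ?; rewrite /mu; repeat (case: ifP => ?); rewrite /X /Y; repeat (case: ifP => ?); rewrite /flip; repeat (case: ifP => ?); lia. Qed.
End Arith.

Set Implicit Arguments. Unset Strict Implicit.

Lemma flat2 (f g h : nat -> nat) p : forall t s,
  (forall m, t <= m < t + p -> f m = h (s + 2 * (m - t)) /\ g m = h (s + 2 * (m - t)).+1) ->
  flatten [seq [:: f m; g m] | m <- iota t p] = map h (iota s (2 * p)).
Proof.
elim: p => [|p IH] t s H; first by rewrite muln0.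
rewrite mulnS /=.
have [-> ->] : f t = h s /\ g t = h s.+1.
  have := H t; rewrite subnn muln0 addn0; apply; lia.
congr [:: _, _ & _].
apply: IH => m hm; have := H m; have -> : s.+2 + 2 * (m - t.+1) = s + 2 * (m - t) by lia.
apply; lia.
Qed.

Section Arith2.
Variable k k4 : nat.
Hypothesis hk : k = 4 * k4.
Hypothesis hk4 : 0 < k4.

Lemma C1E : C1_idx k = map (X k) (iota 0 (2 * k)).
Proof.
rewrite /C1_idx.
have -> : 2 * k = 2 * k./2 + (2 * (k./2 - 1) + 2) by lia.
rewrite iotaD iotaD map_cat map_cat.
congr (_ ++ _ ++ _).
- apply: flat2 => m hm; rewrite add0n subn0 /X; split; repeat (case: ifP => ?); lia.
- apply: flat2 => m hm; rewrite /X; split; repeat (case: ifP => ?); lia.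
- rewrite /= /X; repeat (case: ifP => ?); try lia.
  congr [:: _; _]; lia.
Qed.

Lemma C2E : C2_idx k = map (Y k) (iota 0 (2 * k)).
Proof.
rewrite /C2_idx.
have -> : 2 * k = 2 * k./2 + (2 * (k./2 - 1) + 2) by lia.
rewrite iotaD iotaD map_cat map_cat.
congr (_ ++ _ ++ _).
- apply: flat2 => m hm; rewrite add0n subn0 /Y; split; repeat (case: ifP => ?); lia.
- apply: flat2 => m hm; rewrite /Y; split; repeat (case: ifP => ?); lia.
- rewrite /= /Y; repeat (case: ifP => ?); try lia.
  congr [:: _; _]; lia.
Qed.

Lemma modE x y c d : x = y + c * d -> x %% d = y %% d.
Proof. by move=> ->; rewrite addnC modnMDl. Qed.

Lemma mu_mod i : i < 2 * k -> mu k i = (k + 1) * i %% (2 * k).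
Proof.
move=> hi.
have hi2 := odd_double_half i.
rewrite (@modE _ (i + k * odd i) (i./2)); last first.
  rewrite -{1}hi2 -{3}hi2 hk; rewrite -!mul2n; nia.
rewrite /mu; case: (boolP (odd i)) => ho; last by rewrite muln0 addn0 modn_small.
rewrite muln1; case: ifP => h.
  by rewrite modn_small //; lia.
rewrite (@modE _ (i - k) 1); last by lia.
by rewrite modn_small //; lia.
Qed.

Lemma wrap i : i.+1 %% (2 * k) = if (i %% (2 * k)).+1 == 2 * k then 0 else (i %% (2 * k)).+1.
Proof.
have hn : 0 < 2 * k by lia.
rewrite -addn1 -modnDml addn1.
have := ltn_pmod i hn; case: eqP => [->|h] hl; first by rewrite modnn.
by rewrite modn_small //; lia.
Qed.
End Arith2.


Lemma cf_nth (T : finType) (s : seq T) d r : uniq s -> r < size s ->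
  cycle_fun s (nth d s r) = nth d s (if r.+1 == size s then 0 else r.+1).
Proof.
move=> hu hr; rewrite /cycle_fun index_uniq //.
case: s hu hr => [//|x s] hu hr.
rewrite rot1_cons nth_rcons /= eqSS.
case: ltngtP => h' //=.
  by rewrite (set_nth_default d).
by move: hr; rewrite /=; lia.
Qed.

Lemma cf_out (T : finType) (s : seq T) x : x \notin s -> cycle_fun s x = x.
Proof. by move=> hx; rewrite /cycle_fun memNindex // nth_default // size_rot. Qed.

Lemma cf_inj (T : finType) (s : seq T) : uniq s -> injective (cycle_fun s).
Proof.
move=> hu x y.
set wr := fun r => if r.+1 == size s then 0 else r.+1.
have hw r : r < size s -> wr r < size s.
  by rewrite /wr => hr; case: ifP => /eqP ?; lia.
have wi r r' : r < size s -> r' < size s -> wr r = wr r' -> r = r'.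
  by rewrite /wr => ? ?; repeat case: ifP => /eqP ?; lia.
have hin z : z \in s -> cycle_fun s z = nth x s (wr (index z s)).
  move=> hz; rewrite -{1}(nth_index x hz) cf_nth // index_mem //.
have hmem z : z \in s -> cycle_fun s z \in s.
  by move=> hz; rewrite hin //; apply: mem_nth; apply: hw; rewrite index_mem.
case: (boolP (x \in s)) => hx; case: (boolP (y \in s)) => hy.
- rewrite (hin x hx) (hin y hy); move/eqP; rewrite nth_uniq ?hw ?index_mem //.
  move/eqP/wi; rewrite !index_mem => /(_ hx hy) h.
  by rewrite -(nth_index x hx) h nth_index.
- by move=> h; move: (hmem x hx); rewrite h cf_out // (negbTE hy).
- by move=> h; move: (hmem y hy); rewrite -h cf_out // (negbTE hx).
- by rewrite !cf_out.
Qed.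

Lemma cycle_permE (T : finType) (s : seq T) : uniq s -> cycle_perm s =1 cycle_fun s.
Proof.
move=> hu x; rewrite /cycle_perm; case: injectiveP => [h|h]; first by rewrite permE.
by case: h; apply: cf_inj.
Qed.

Lemma cyc2 (T : finType) (u v x : T) : u != v ->
  cycle_perm [:: u; v] x = if x == u then v else if x == v then u else x.
Proof.
move=> huv; rewrite cycle_permE /=; last by rewrite inE huv.
rewrite /cycle_fun /=.
case: (eqVneq x u) => [->|hxu]; first by [].
case: (eqVneq x v) => [->|hxv]; first by [].
by [].
Qed.


Section Main.
Variable F : finFieldType.
Variable cs : seq F.
Variable k k4 : nat.
Hypothesis hk : k = 4 * k4.
Hypothesis hk4 : 0 < k4.
Hypothesis hu : uniq cs.
Hypothesis hs : size cs = 4 * k.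
Hypothesis hF : #|F| = 4 * k.

Lemma cc_inj i j : i < 4 * k -> j < 4 * k -> (cc cs i == cc cs j) = (i == j).
Proof. by move=> hi hj; rewrite /cc nth_uniq // hs. Qed.

Lemma pa_gen m j : m <= 2 * k -> j < 4 * k ->
  (\prod_(i < m) cycle_perm [:: cc cs (2 * i); cc cs (2 * i).+1])%g (cc cs j)
  = if j < 2 * m then cc cs (flip j) else cc cs j.
Proof.
elim: m => [|m IH] hm hj; first by rewrite big_ord0 perm1.
rewrite big_ord_recr permM IH //; last by lia.
rewrite [nat_of_ord ord_max]/=.
have hne : cc cs (2 * m) != cc cs (2 * m).+1 by rewrite cc_inj; lia.
rewrite cyc2 //.
have fl : flip j < 4 * k by rewrite /flip; case: ifP => ?; lia.
have hb : (2 * m).+1 < 4 * k by lia.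
case: (ltnP j (2 * m)) => h1.
  rewrite !cc_inj //; try lia.
  rewrite ifF; last by apply/negbTE; rewrite /flip; case: ifP => ?; lia.
  rewrite ifF; last by apply/negbTE; rewrite /flip; case: ifP => ?; lia.
  by rewrite ifT //; lia.
rewrite !cc_inj //; try lia.
case: eqP => [->|h2].
  by rewrite ifT; [congr cc; rewrite /flip; case: ifP => ?; lia | lia].
case: eqP => [->|h3].
  by rewrite ifT; [congr cc; rewrite /flip; case: ifP => ?; lia | lia].
by rewrite ifF //; lia.
Qed.

Lemma pa j : j < 4 * k -> perm_a cs k (cc cs j) = cc cs (flip j).
Proof. by move=> hj; rewrite /perm_a pa_gen // ifT //; lia. Qed.


Definition P (s : bool) (i : nat) : F :=
  cc cs (if s then Y k (i %% (2 * k)) else X k (i %% (2 * k))).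

Lemma n_gt0 : 0 < 2 * k. Proof. lia. Qed.

Lemma P_inj s i s' i' : P s i = P s' i' -> s = s' /\ i %% (2 * k) = i' %% (2 * k).
Proof.
have h1 := ltn_pmod i n_gt0; have h2 := ltn_pmod i' n_gt0.
move/eqP; rewrite /P cc_inj; last 2 first.
  by case: s; [exact: (Y_lt hk hk4 h1) | exact: (X_lt hk hk4 h1)].
  by case: s'; [exact: (Y_lt hk hk4 h2) | exact: (X_lt hk hk4 h2)].
case: s; case: s' => /eqP h.
- by split => //; apply: (Y_inj hk hk4).
- by case: (XY_neq hk hk4 h2 h1).
- by case: (XY_neq hk hk4 h1 h2).
- by split => //; apply: (X_inj hk hk4).
Qed.

Lemma P_surj x : exists s i, x = P s i.
Proof.
pose Q := fun p : bool * 'I_(2 * k) => P p.1 p.2.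
have Qi : injective Q.
  move=> [s i] [s' i'] /P_inj [/= -> h]; congr pair; apply: val_inj.
  by move: h; rewrite !modn_small.
have := @inj_card_onto _ _ Q Qi; rewrite card_prod card_bool card_ord hF.
have hle : 4 * k <= 2 * (2 * k) by lia.
move=> /(_ hle x) /codomP [[s i] ->].
by exists s, i.
Qed.

Definition sX := map (cc cs) (map (X k) (iota 0 (2 * k))).
Definition sY := map (cc cs) (map (Y k) (iota 0 (2 * k))).

Lemma sX_uniq : uniq sX.
Proof.
rewrite /sX map_inj_in_uniq.
  rewrite map_inj_in_uniq ?iota_uniq // => i j; rewrite !mem_iota => hi hj.
  by apply: (X_inj hk hk4); lia.
move=> x y /mapP [i hi ->] /mapP [j hj ->] /eqP.
move: hi hj; rewrite !mem_iota => hi hj.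
by rewrite cc_inj; [move/eqP -> | apply: (X_lt hk hk4); lia | apply: (X_lt hk hk4); lia].
Qed.

Lemma sY_uniq : uniq sY.
Proof.
rewrite /sY map_inj_in_uniq.
  rewrite map_inj_in_uniq ?iota_uniq // => i j; rewrite !mem_iota => hi hj.
  by apply: (Y_inj hk hk4); lia.
move=> x y /mapP [i hi ->] /mapP [j hj ->] /eqP.
move: hi hj; rewrite !mem_iota => hi hj.
by rewrite cc_inj; [move/eqP -> | apply: (Y_lt hk hk4); lia | apply: (Y_lt hk hk4); lia].
Qed.

Lemma sX_nth r : r < 2 * k -> nth (cc cs 0) sX r = cc cs (X k r).
Proof.
move=> hr; rewrite /sX (nth_map 0) ?size_map ?size_iota //.
by rewrite (nth_map 0) ?size_iota // nth_iota.
Qed.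

Lemma sY_nth r : r < 2 * k -> nth (cc cs 0) sY r = cc cs (Y k r).
Proof.
move=> hr; rewrite /sY (nth_map 0) ?size_map ?size_iota //.
by rewrite (nth_map 0) ?size_iota // nth_iota.
Qed.

Lemma Y_notin r : r < 2 * k -> cc cs (Y k r) \notin sX.
Proof.
move=> hr; apply/negP => /mapP [y /mapP [i hi ->] /eqP].
move: hi; rewrite mem_iota => hi.
rewrite cc_inj; [move/eqP => h | apply: (Y_lt hk hk4) => // | apply: (X_lt hk hk4); lia].
by apply: (XY_neq hk hk4 _ hr (esym h)); lia.
Qed.

Lemma X_notin r : r < 2 * k -> cc cs (X k r) \notin sY.
Proof.
move=> hr; apply/negP => /mapP [y /mapP [i hi ->] /eqP].
move: hi; rewrite mem_iota => hi.
rewrite cc_inj; [move/eqP => h | apply: (X_lt hk hk4) => // | apply: (Y_lt hk hk4); lia].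
by apply: (XY_neq hk hk4 hr _ h); lia.
Qed.

Lemma b_P s i : perm_b cs k (P s i) = P s i.+1.
Proof.
have hr := ltn_pmod i n_gt0.
have hsz : size sX = 2 * k by rewrite /sX !size_map size_iota.
have hszY : size sY = 2 * k by rewrite /sY !size_map size_iota.
rewrite /perm_b permM /perm_C1 /perm_C2 (C1E hk hk4) (C2E hk hk4) -/sX -/sY.
rewrite !cycle_permE ?sX_uniq ?sY_uniq // /P (wrap hk hk4).
case: s.
  rewrite [cycle_fun sX _]cf_out ?Y_notin // -(@sY_nth _ hr) cf_nth ?sY_uniq ?hszY // sY_nth //.
  by case: ifP => /eqP ? //; lia.
rewrite -(@sX_nth _ hr) [cycle_fun sX _]cf_nth ?sX_uniq ?hsz // sX_nth; last by case: ifP => /eqP ? //; lia.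
by rewrite cf_out ?X_notin //; case: ifP => /eqP ? //; lia.
Qed.

Lemma a_P s i : perm_a cs k (P s i) = P (~~ s) ((k + 1) * i).
Proof.
have hr := ltn_pmod i n_gt0.
rewrite /P -modnMmr -(mu_mod hk hk4) //.
case: s => /=; rewrite pa ?(flipY hk hk4) ?(flipX hk hk4) //.
  exact: (Y_lt hk hk4).
exact: (X_lt hk hk4).
Qed.


Lemma bj_P j s i : (perm_b cs k ^+ j)%g (P s i) = P s (i + j).
Proof.
elim: j => [|j IH]; first by rewrite expg0 perm1 addn0.
by rewrite expgSr permM IH b_P addnS.
Qed.

Lemma act e j s i : e < 2 -> (perm_a cs k ^+ e * perm_b cs k ^+ j)%g (P s i) =
  P (s (+) (e == 1)) ((if e == 1 then k + 1 else 1) * i + j).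
Proof.
case: e => [|[|//]] _; rewrite permM.
  by rewrite expg0 perm1 bj_P mul1n addbF.
by rewrite expg1 a_P bj_P addbT.
Qed.

Lemma Peq s i i' : i %% (2 * k) = i' %% (2 * k) -> P s i = P s i'.
Proof. by rewrite /P => ->. Qed.

Lemma G1P g : (g \in G1 cs k) <-> (exists e j, [/\ e < 2, j < 2 * k & g = (perm_a cs k ^+ e * perm_b cs k ^+ j)%g]).
Proof.
split.
  by case/imset2P => e j _ _ ->; exists e, j; split.
move=> [e [j [he hj ->]]]; apply/imset2P.
by exists (Ordinal he) (Ordinal hj).
Qed.

Lemma main_group : group_set (G1 cs k).
Proof.
apply/group_setP; split.
  by apply/G1P; exists 0, 0; split => //; [lia | rewrite !expg0 mulg1].
move=> x y /G1P [e [j [he hj ->]]] /G1P [e' [j' [he' hj' ->]]].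
apply/G1P; exists ((e + e') %% 2), (((if e' == 1 then k + 1 else 1) * j + j') %% (2 * k)).
split; [apply: ltn_pmod; lia | apply: ltn_pmod; lia |].
apply/permP => z; have [s [i ->]] := P_surj z.
rewrite permM !act ?ltn_pmod //.
case: e he => [|[|//]] _; case: e' he' => [|[|//]] _; case: s => /=; apply: Peq;
  rewrite modnDmr.
- by rewrite !mul1n addnA.
- by rewrite !mul1n addnA.
- by congr modn; nia.
- by congr modn; nia.
- by congr modn; nia.
- by congr modn; nia.
- by apply: (@modE _ _ ((2 * k4 + 1) * i)); rewrite hk; nia.
- by apply: (@modE _ _ ((2 * k4 + 1) * i)); rewrite hk; nia.
Qed.

Lemma main_card : #|G1 cs k| = 4 * k.
Proof.
pose f := fun p : 'I_2 * 'I_(2 * k) => (perm_a cs k ^+ p.1 * perm_b cs k ^+ p.2)%g.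
have -> : G1 cs k = f @: setT.
  apply/setP => g; apply/idP/idP.
    by case/imset2P => e j _ _ ->; apply/imsetP; exists (e, j).
  by case/imsetP => [[e j]] _ ->; apply/imset2P; exists e j.
rewrite card_imset ?cardsT ?card_prod ?card_ord; first lia.
move=> [e j] [e' j'] /permP /(_ (P false 0)); rewrite !act ?ltn_ord //.
move=> /P_inj [hb]; rewrite !muln0 !add0n !modn_small ?ltn_ord // => hj.
have he : e = e' :> nat.
  move: hb (ltn_ord e) (ltn_ord e'); case: (nat_of_ord e) => [|[|?]]; case: (nat_of_ord e') => [|[|?]] //.
by congr pair; apply: val_inj.
Qed.

Lemma main_fpf g : g \in G1 cs k -> g != 1%g -> forall x : F, g x != x.
Proof.
move=> /G1P [e [j [he hj ->]]] hne x; have [s [i ->]] := P_surj x.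
rewrite act //; apply/eqP => /P_inj [hb hm].
case: e he hne hb hm => [|[|//]] _ hne hb hm; last by case: s hb.
move: hm; rewrite mul1n -{2}(addn0 i) => /eqP; rewrite eqn_modDl mod0n modn_small // => /eqP hj0.
by move: hne; rewrite hj0 !expg0 mulg1 eqxx.
Qed.

End Main.


Unset Implicit Arguments.

Theorem theorem3p1 (F : finFieldType) (cs : seq F) (l k q : nat) :
  2 <= l -> k = 2 ^ l -> q = 4 * k -> #|F| = q ->
  uniq cs -> size cs = q ->
  [/\ group_set (G1 cs k),
      #|G1 cs k| = q &
      forall g : {perm F}, g \in G1 cs k -> g != 1%g -> forall x : F, g x != x].
Proof.
move=> hl hk hq hF hu hs.
have hk' : k = 4 * 2 ^ (l - 2) by rewrite hk -{1}(subnKC hl) expnD.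
have hk4 : 0 < 2 ^ (l - 2) by rewrite expn_gt0.
subst q.
split.
- by eapply main_group; eassumption.
- by eapply main_card; eassumption.
- by move=> g hg hne x; eapply main_fpf; eassumption.
Qed.
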